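(* Let $X$ be any real random variable and $q(x)=\min\{\mathbb{P}(X\leqslant x),\mathbb{P}(X\geqslant x)\}$. Let $p>-1$, $p\neq 0$. (a) If $p>0$, then $\big(2^p(p+1)\big)^{-1}\leqslant\mathbb{E}\big(q(X)^p\big)\leqslant 1$. (b) If $-1<p<0$, then $1\leqslant\mathbb{E}\big(q(X)^p\big)\leqslant\big(2^p(p+1)\big)^{-1}$. *)

(* Defs.v *)
From HB Require Import structures.
From mathcomp Require Import all_boot all_order all_algebra.
From mathcomp Require Import all_classical all_reals all_analysis.
Set Implicit Arguments. Unset Strict Implicit. Unset Printing Implicit Defensive.
Import Order.TTheory GRing.Theory Num.Theory.
Local Open Scope classical_set_scope.
Local Open Scope ring_scope.

Definition qfun d (T : measurableType d) (R : realType) (P : probability T R)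
  (X : T -> R) (x : R) : R :=
  Num.min (fine (P [set w | X w <= x])) (fine (P [set w | x <= X w])).

(* Main.v *)
Require Import Defs.
From HB Require Import structures.
From mathcomp Require Import all_boot all_order all_algebra.
From mathcomp Require Import all_classical all_reals all_analysis.
From mathcomp Require Import ring lra.
From mathcomp Require Import measurable_realfun.
Import Order.TTheory GRing.Theory Num.Theory.
Import numFieldNormedType.Exports.
Local Open Scope classical_set_scope.
Local Open Scope ring_scope.
Set Warnings "-notation-overridden,-ambiguous-paths,-notation-incompatible-prefix".

Lemma mset_le d (T : measurableType d) (R : realType) (X : T -> R)
  (mX : measurable_fun setT X) (x : R) : measurable [set v | X v <= x].
Proof.
have := mX measurableT _ (measurable_itv `]-oo, x]); rewrite setTI.
by congr measurable; apply/seteqP; split => v /=; rewrite in_itv.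
Qed.

Lemma union_bound d (T : measurableType d) (R : realType) (P : probability T R)
  (A : nat -> set T) (t : R) : (forall n, measurable (A n)) ->
  nondecreasing_seq A -> (forall n, P (A n) <= t%:E)%E ->
  (P (\bigcup_n A n) <= t%:E)%E.
Proof.
move=> mA ndA At.
have h := nondecreasing_cvg_mu (mu := P) mA (bigcupT_measurable _ mA) ndA.
rewrite -(cvg_lim _ h) //.
apply: lime_le; first by apply/cvg_ex; eexists; exact: h.
exact: nearW.
Qed.

Lemma fineP d (T : measurableType d) (R : realType) (P : probability T R) (A : set T) :
  measurable A -> ((fine (P A))%:E = P A)%E.
Proof. by move=> mA; rewrite fineK // fin_num_measure. Qed.

Lemma seq_bound d (T : measurableType d) (R : realType) (P : probability T R)
  (X : T -> R) (mX : measurable_fun setT X) (t : R) (S : set R) (u : nat -> R) :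
  measurable (X @^-1` S) -> nondecreasing_seq u ->
  (forall n, fine (P [set v | X v <= u n]) <= t) ->
  (forall x, S x -> exists n, x <= u n) -> (P (X @^-1` S) <= t%:E)%E.
Proof.
move=> mS ndu Fu Su.
apply: (@le_trans _ _ (P (\bigcup_n [set v | X v <= u n]))).
  apply: le_measure; rewrite ?inE //; first by apply: bigcupT_measurable => n; exact: mset_le.
  by move=> w /Su [n Hn]; exists n.
apply: union_bound; first by move=> n; exact: mset_le.
  by move=> n m nm; apply/subsetPset => w /= h; apply: le_trans h (ndu _ _ nm).
by move=> n; rewrite -fineP ?lee_fin //; exact: mset_le.
Qed.

Definition Fcdf d (T : measurableType d) (R : realType) (P : probability T R)
  (X : T -> R) (x : R) : R := fine (P [set v | X v <= x]).
Arguments Fcdf {d T R} P X x.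

Lemma Fcdf_nd d (T : measurableType d) (R : realType) (P : probability T R)
  (X : T -> R) (mX : measurable_fun setT X) : {homo Fcdf P X : x y / x <= y}.
Proof.
move=> x y xy; rewrite /Fcdf fine_le ?fin_num_measure //; try exact: mset_le.
apply: le_measure; rewrite ?inE; try exact: mset_le.
by move=> w /= h; apply: le_trans h xy.
Qed.

Lemma mFcdfX d (T : measurableType d) (R : realType) (P : probability T R)
  (X : T -> R) (mX : measurable_fun setT X) : measurable_fun setT (Fcdf P X \o X).
Proof.
apply: measurableT_comp => //.
exact: measurable_realfun.nondecreasing_measurable (@Fcdf_nd _ _ _ P X mX).
Qed.

Lemma L1 d (T : measurableType d) (R : realType) (P : probability T R)
  (X : T -> R) (mX : measurable_fun setT X) (t : R) : 0 <= t ->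
  (P [set w | (Fcdf P X (X w) <= t)%R] <= t%:E)%E.
Proof.
move=> t0.
set S := [set x | Fcdf P X x <= t].
have mS : measurable (X @^-1` S) by exact: (@mset_le _ _ _ _ (@mFcdfX _ _ _ P X mX) t).
have FS : forall x y, x <= y -> S y -> S x.
  by move=> x y xy; rewrite /S /=; apply: le_trans; exact: Fcdf_nd.
have [S0|/set0P[x0 Sx0]] := eqVneq S set0.
  rewrite (_ : [set w | _] = X @^-1` S) // S0 preimage_set0 measure0 lee_fin //.
rewrite (_ : [set w | _] = X @^-1` S) //.
have [ub|nub] := pselect (has_ubound S).
  have hs : has_sup S by split => //; exists x0.
  set c := sup S.
  have [Sc|nSc] := pselect (S c).
    apply: (@seq_bound _ _ _ P X mX t S (fun _ => c)) => //.
    by move=> x Sx; exists 0%N; exact: sup_upper_bound.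
  apply: (@seq_bound _ _ _ P X mX t S (fun n => c - n.+1%:R^-1)) => //.
  - move=> n m nm; rewrite lerD2l lerN2 lef_pV2 ?posrE ?ltr0n // ler_nat.
    by rewrite ltnS.
  - move=> n; have hn : 0 < (n.+1%:R : R)^-1 by rewrite invr_gt0 ltr0n.
    have [e Se He] := sup_adherent hn hs.
    exact: (FS _ _ (ltW He) Se).
  - move=> x Sx; have xc : x < c.
      rewrite lt_neqAle sup_upper_bound // andbT.
      by apply/eqP => xc; apply: nSc; rewrite -xc.
    have [k Hk] := ltr_add_invr xc; exists k.
    by rewrite lerBrDr ltW.
apply: (@seq_bound _ _ _ P X mX t S (fun n => n%:R)) => //.
- by move=> n m nm; rewrite ler_nat.
- move=> n; have /existsNP[z] : ~ ubound S n%:R by move=> h; apply: nub; exists n%:R.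
  move=> /not_implyP[Sz /negP]; rewrite -ltNge => nz.
  exact: (FS _ _ (ltW nz) Sz).
- move=> x Sx; exists (Num.Def.archi_bound `|x|).
  apply: le_trans (ltW (archi_boundP (normr_ge0 x))).
  exact: ler_norm.
Qed.

Definition Gcdf d (T : measurableType d) (R : realType) (P : probability T R)
  (X : T -> R) (x : R) : R := fine (P [set v | x <= X v]).
Arguments Gcdf {d T R} P X x.

Lemma GcdfE d (T : measurableType d) (R : realType) (P : probability T R)
  (X : T -> R) (x : R) : Gcdf P X x = Fcdf P (fun w => - X w) (- x).
Proof.
rewrite /Gcdf /Fcdf; congr (fine (P _)).
by apply/seteqP; split => v /=; rewrite lerN2.
Qed.

Lemma mGcdfX d (T : measurableType d) (R : realType) (P : probability T R)
  (X : T -> R) (mX : measurable_fun setT X) : measurable_fun setT (Gcdf P X \o X).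
Proof.
have mNX : measurable_fun setT (fun w => - X w) by exact: measurableT_comp.
have := @mFcdfX _ _ _ P _ mNX.
by apply: eq_measurable_fun => w _ /=; rewrite GcdfE.
Qed.

Lemma L2 d (T : measurableType d) (R : realType) (P : probability T R)
  (X : T -> R) (mX : measurable_fun setT X) (t : R) : 0 <= t ->
  (P [set w | (Gcdf P X (X w) <= t)%R] <= t%:E)%E.
Proof.
move=> t0.
have mNX : measurable_fun setT (fun w => - X w) by exact: measurableT_comp.
have := @L1 _ _ _ P _ mNX t t0.
by congr (P _ <= _)%E; apply/seteqP; split => w /=; rewrite GcdfE.
Qed.

Lemma qfunE d (T : measurableType d) (R : realType) (P : probability T R)
  (X : T -> R) x : qfun P X x = Num.min (Fcdf P X x) (Gcdf P X x).
Proof. by []. Qed.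

Lemma mQ d (T : measurableType d) (R : realType) (P : probability T R)
  (X : T -> R) (mX : measurable_fun setT X) :
  measurable_fun setT (fun w => qfun P X (X w)).
Proof.
exact: measurable_realfun.measurable_minr (@mFcdfX _ _ _ P X mX) (@mGcdfX _ _ _ P X mX).
Qed.

Lemma L3 d (T : measurableType d) (R : realType) (P : probability T R)
  (X : T -> R) (mX : measurable_fun setT X) (t : R) : 0 <= t ->
  (P [set w | (qfun P X (X w) <= t)%R] <= (2 * t)%:E)%E.
Proof.
move=> t0.
apply: (@le_trans _ _ (P ([set w | (Fcdf P X (X w) <= t)%R] `|`
                           [set w | (Gcdf P X (X w) <= t)%R]))).
  apply: le_measure; rewrite ?inE; first exact: (@mset_le _ _ _ _ (@mQ _ _ _ P X mX) t).
    apply: measurableU; first exact: (@mset_le _ _ _ _ (@mFcdfX _ _ _ P X mX) t).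
    exact: (@mset_le _ _ _ _ (@mGcdfX _ _ _ P X mX) t).
  by move=> w /=; rewrite qfunE ge_min => /orP[]; [left|right].
apply: le_trans (measureU2 _ _ _) _.
- exact: (@mset_le _ _ _ _ (@mFcdfX _ _ _ P X mX) t).
- exact: (@mset_le _ _ _ _ (@mGcdfX _ _ _ P X mX) t).
rewrite (_ : 2 * t = t + t); last by ring.
by rewrite EFinD leeD // ?L1 ?L2.
Qed.

Lemma layer d (T : measurableType d) (R : realType) (P : probability T R)
  (Y : T -> R) (mY : measurable_fun setT Y) : (forall w, 0 <= Y w) ->
  (\int[P]_w (Y w)%:E = \int[lebesgue_measure]_(r in `[0%R, +oo[) P [set w | (r < Y w)%R])%E.
Proof.
move=> Y0.
pose Yr : {RV P >-> R} := mfun_Sub (mem_set mY).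
have := @ge0_expectation_ccdf _ _ _ P Yr Y0.
rewrite expectation_def /ccdf.
move=> ->.
apply: eq_integral => r _.
rewrite /distribution /= /pushforward; congr (P _).
by apply/seteqP; split => w /=; rewrite in_itv /= andbT.
Qed.

Lemma powR_le_neg (R : realType) (e x y : R) : e <= 0 -> 0 < x -> x <= y ->
  y `^ e <= x `^ e.
Proof.
move=> e0 x0 xy; have y0 : 0 < y by apply: lt_le_trans xy.
rewrite /powR !gt_eqF // ler_expR ler_wnM2l // ler_ln // posrE.
Qed.

Lemma powR_cvgy0 (R : realType) (e : R) : e < 0 -> x `^ e @[x --> +oo] --> 0.
Proof.
move=> e0; apply/cvgrPdist_le => eps eps0; near=> x.
have x0 : 0 < x by near: x; apply: nbhs_pinfty_gt; exact: num_real.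
rewrite sub0r normrN ger0_norm ?powR_ge0 //.
have M0 : 0 < eps `^ e^-1 by rewrite powR_gt0.
have Mx : eps `^ e^-1 <= x by near: x; apply: nbhs_pinfty_ge; exact: num_real.
apply: (@le_trans _ _ ((eps `^ e^-1) `^ e)).
  by apply: powR_le_neg => //; exact: ltW.
by rewrite -powRrM mulVf ?lt_eqF // powRr1 // ltW.
Unshelve. all: end_near. Qed.

Lemma powR_contx (R : realType) (e a : R) : 0 < a -> {for a, continuous (fun y : R => y `^ e)}.
Proof.
move=> a0; apply: differentiable_continuous; apply/derivable1_diffP.
by apply: derivable_powR; rewrite in_itv /= a0.
Qed.

Lemma Fder (R : realType) (c e x : R) : 0 < x ->
  is_derive x 1 (fun y : R => y - c * y `^ e) (1 - c * (e * x `^ (e - 1))).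
Proof.
move=> x0.
have := is_deriveB (is_derive_id x 1) (is_deriveZ c (is_derive1_powR e x0)).
have -> : (id - c \*: (@powR R ^~ e)) = (fun y : R => y - c * y `^ e).
  by apply/funext => y.
by [].
Qed.

Lemma FTCpos (R : realType) (s a : R) : 0 < s -> 0 < a ->
  (\int[lebesgue_measure]_(x in `[0%R, a]) (1 - 2 * x `^ s)%:E =
   (a - (2 / (s + 1)) * a `^ (s + 1))%:E)%E.
Proof.
move=> s0 a0.
set c := 2 / (s + 1).
have s1 : s + 1 != 0 by rewrite gt_eqF // ltr_wpDr.
have s10 : 0 < s + 1 by rewrite ltr_wpDr // ltW.
have fc : forall x : R, 0 < x -> {for x, continuous (fun y : R => 1 - 2 * y `^ s)}.
  move=> x x0; apply: cvgB; first exact: cvg_cst.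
  by apply: cvgM; [exact: cvg_cst | exact: powR_contx].
have Fd : forall x : R, 0 < x -> is_derive x 1 (fun y : R => y - c * y `^ (s + 1))
                       (1 - c * ((s + 1) * x `^ (s + 1 - 1))) by move=> x x0; exact: Fder.
rewrite (@continuous_FTC2 _ (fun x => 1 - 2 * x `^ s) (fun y : R => y - c * y `^ (s + 1))) //.
- by rewrite powR0 // mulr0 subr0 sube0.
- apply/continuous_within_itvP => //; split.
  + by move=> x; rewrite in_itv /= => /andP[x0 _]; exact: fc.
  + rewrite powR0 ?gt_eqF // mulr0.
    apply: cvgB; first exact: cvg_cst.
    rewrite -[X in _ --> X](mulr0 2).
    by apply: cvgM; [exact: cvg_cst | exact: powR_cvg0].
  + exact/cvg_at_left_filter/fc.
- split.
  + by move=> x; rewrite in_itv /= => /andP[x0 _]; by case: (Fd x x0).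
  + rewrite powR0 // mulr0 subr0.
    rewrite -[X in _ --> X](subr0 0); apply: cvgB; first exact/cvg_at_right_filter/cvg_id.
    by rewrite -[X in _ --> X](mulr0 c); apply: cvgM; [exact: cvg_cst | exact: powR_cvg0].
  + apply: cvg_at_left_filter.
    have hd : differentiable (fun y : R => y - c * y `^ (s + 1)) a.
      by apply/derivable1_diffP; case: (Fd a a0).
    exact: (differentiable_continuous hd).
- move=> x; rewrite in_itv /= => /andP[x0 _].
  have hF := Fd x x0; rewrite derive1E derive_val.
  rewrite (_ : s + 1 - 1 = s); last by ring.
  by rewrite /c; field.
Qed.

Lemma Fder2 (R : realType) (c e x : R) : 0 < x ->
  is_derive x 1 (fun y : R => c * y `^ e) (c * (e * x `^ (e - 1))).
Proof.
move=> x0.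
have := is_deriveZ c (is_derive1_powR e x0).
have -> : (c \*: (@powR R ^~ e)) = (fun y : R => c * y `^ e).
  by apply/funext => y.
by [].
Qed.

Lemma FTCneg (R : realType) (s a : R) : s < -1 -> 0 < a ->
  (\int[lebesgue_measure]_(x in `[a, +oo[) (2 * x `^ s)%:E =
   (- ((2 / (s + 1)) * a `^ (s + 1)))%:E)%E.
Proof.
move=> s0 a0.
set c := 2 / (s + 1).
have s10 : s + 1 < 0 by rewrite -ltrBrDr sub0r.
have s1 : s + 1 != 0 by rewrite lt_eqF.
have Fd : forall x : R, 0 < x -> is_derive x 1 (fun y : R => c * y `^ (s + 1))
                       (c * ((s + 1) * x `^ (s + 1 - 1))) by move=> x x0; exact: Fder2.
have Fc : forall x : R, 0 < x -> {for x, continuous (fun y : R => c * y `^ (s + 1))}.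
  move=> x x0; have hd : differentiable (fun y : R => c * y `^ (s + 1)) x.
    by apply/derivable1_diffP; case: (Fd x x0).
  exact: (differentiable_continuous hd).
rewrite (@ge0_continuous_FTC2y _ (fun x => 2 * x `^ s) (fun y : R => c * y `^ (s + 1)) a 0) //.
- by rewrite sub0e.
- by move=> x _; rewrite mulr_ge0 ?powR_ge0.
- apply: continuous_in_subspaceT => x; rewrite inE /= in_itv /= andbT => ax.
  apply: cvgM; first exact: cvg_cst.
  by apply: powR_contx; apply: lt_le_trans ax.
- rewrite -(mulr0 c); apply: cvgM; first exact: cvg_cst.
  exact: powR_cvgy0.
- by move=> x ax; case: (Fd x (lt_trans a0 ax)).
- exact/cvg_at_right_filter/Fc.
- move=> x; rewrite in_itv /= andbT => ax.
  have hF := Fd x (lt_trans a0 ax); rewrite derive1E derive_val.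
  rewrite (_ : s + 1 - 1 = s); last by ring.
  by rewrite /c; field.
Qed.

Lemma mset_gt d (T : measurableType d) (R : realType) (X : T -> R)
  (mX : measurable_fun setT X) (x : R) : measurable [set v | x < X v].
Proof.
have := mX measurableT _ (measurable_itv `]x, +oo[); rewrite setTI.
by congr measurable; apply/seteqP; split => v /=; rewrite in_itv /= andbT.
Qed.

Lemma mlayer d (T : measurableType d) (R : realType) (P : probability T R)
  (Y : T -> R) (mY : measurable_fun setT Y) :
  measurable_fun setT (fun r : R => P [set w | (r < Y w)%R]).
Proof.
pose Yr : {RV P >-> R} := mfun_Sub (mem_set mY).
apply: eq_measurable_fun (ccdf_measurable Yr) => r _.
rewrite /ccdf /distribution /= /pushforward; congr (P _).
by apply/seteqP; split => w /=; rewrite in_itv /= andbT.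
Qed.

Lemma Fcdf01 d (T : measurableType d) (R : realType) (P : probability T R)
  (X : T -> R) (mX : measurable_fun setT X) x : 0 <= Fcdf P X x <= 1.
Proof.
rewrite /Fcdf fine_ge0 ?measure_ge0 //=.
rewrite -lee_fin fineP; last exact: mset_le.
by apply: probability_le1; exact: mset_le.
Qed.

Lemma Gcdf01 d (T : measurableType d) (R : realType) (P : probability T R)
  (X : T -> R) (mX : measurable_fun setT X) x : 0 <= Gcdf P X x <= 1.
Proof.
rewrite GcdfE; apply: Fcdf01; exact: measurableT_comp.
Qed.

Lemma Q01 d (T : measurableType d) (R : realType) (P : probability T R)
  (X : T -> R) (mX : measurable_fun setT X) x : 0 <= qfun P X x <= 1.
Proof.
rewrite qfunE; have /andP[F0 F1] := @Fcdf01 _ _ _ P X mX x; have /andP[G0 G1] := @Gcdf01 _ _ _ P X mX x.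
by rewrite le_min F0 G0 /= ge_min F1.
Qed.

Lemma L4 d (T : measurableType d) (R : realType) (P : probability T R)
  (X : T -> R) (mX : measurable_fun setT X) (u : R) : 0 <= u ->
  ((1 - 2 * u)%:E <= P [set w | (u < qfun P X (X w))%R])%E.
Proof.
move=> u0.
have mA := @mset_le _ _ _ _ (@mQ _ _ _ P X mX) u.
rewrite (_ : [set w | _] = ~` [set w | (qfun P X (X w) <= u)%R]); last first.
  by apply/seteqP; split => w /=; rewrite ltNge => /negP.
rewrite probability_setC // EFinB leeB //.
exact: L3.
Qed.

Lemma alg (R : realType) (p : R) : p != 0 -> p + 1 != 0 ->
  (2 `^ p * (p + 1))^-1 = 2 `^ (- p) - (2 / (p^-1 + 1)) * (2 `^ (- p)) `^ (p^-1 + 1).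
Proof.
move=> p0 p1.
have e1 : - p * (p^-1 + 1) = -1 + - p by field.
rewrite -powRrM e1 powRD; last by apply/implyP => _; rewrite pnatr_eq0.
rewrite powR_inv1 // !powRN.
have b0 : 2 `^ p != 0 :> R by rewrite gt_eqF // powR_gt0.
have q1 : p^-1 + 1 != 0.
  by rewrite (_ : p^-1 + 1 = (p + 1) / p); [rewrite mulf_neq0 // invr_eq0 | field].
have two : (2:R) != 0 by rewrite pnatr_eq0.
by field; rewrite b0 p0 addrC p1.
Qed.

Lemma mfpos (R : realType) (s : R) :
  measurable_fun setT (fun x : R => ((1 - 2 * x `^ s)%:E)).
Proof.
apply/measurable_EFinP.
apply: (@measurable_funB _ _ _ _ (cst 1) (fun x => 2 * x `^ s)) => //.
by apply: (@measurable_funM _ _ _ _ (cst 2) (fun x => x `^ s)).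
Qed.

Lemma mfneg (R : realType) (s : R) :
  measurable_fun setT (fun x : R => ((2 * x `^ s)%:E)).
Proof.
apply/measurable_EFinP.
by apply: (@measurable_funM _ _ _ _ (cst 2) (fun x => x `^ s)).
Qed.

Theorem proposition3p2 (d : measure_display) (T : measurableType d)
  (R : realType) (P : probability T R) (X : T -> R)
  (mX : measurable_fun setT X) (p : R) (hp1 : -1 < p) (hp0 : p != 0) :
  (0 < p ->
     (((2 `^ p * (p + 1))^-1)%:E <= \int[P]_w ((qfun P X (X w)) `^ p)%:E
      /\ \int[P]_w ((qfun P X (X w)) `^ p)%:E <= 1%E)%E) /\
  (p < 0 ->
     (1%E <= \int[P]_w ((qfun P X (X w)) `^ p)%:E
      /\ \int[P]_w ((qfun P X (X w)) `^ p)%:E <= ((2 `^ p * (p + 1))^-1)%:E)%E).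
Proof.
have mQ' := @mQ _ _ _ P X mX.
have Q0 : forall w, 0 <= qfun P X (X w).
  by move=> w; have /andP[] := @Q01 _ _ _ P X mX (X w).
have Q1 : forall w, qfun P X (X w) <= 1.
  by move=> w; have /andP[] := @Q01 _ _ _ P X mX (X w).
have mY : measurable_fun setT (fun w => qfun P X (X w) `^ p).
  exact: measurableT_comp (measurable_powR p) mQ'.
have Y0 : forall w, 0 <= qfun P X (X w) `^ p by move=> w; exact: powR_ge0.
have lay := @layer _ _ _ P _ mY Y0.
have mG := @mlayer _ _ _ P _ mY.
set a := 2 `^ (- p).
have a0 : 0 < a by rewrite powR_gt0.
have p1 : p + 1 != 0 by rewrite gt_eqF // -ltrBlDr sub0r.
have eqa := @alg R p hp0 p1.
split => hp.
  split.
    rewrite eqa lay.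
    have s0 : 0 < p^-1 by rewrite invr_gt0.
    rewrite -(@FTCpos R _ _ s0 a0).
    apply: (@le_trans _ _ (\int[lebesgue_measure]_(r in `[0%R, a])
                             P [set w | (r < qfun P X (X w) `^ p)%R])%E).
      apply: ge0_le_integral => //.
      - move=> r; rewrite /= in_itv /= => /andP[r0 ra].
        rewrite lee_fin subr_ge0.
        have : r `^ p^-1 <= 2^-1.
          have := @ge0_ler_powR R p^-1 (ltW s0) r a.
          rewrite !nnegrE r0 ltW // => /(_ isT isT ra) /=.
          by rewrite /a -powRrM mulNr mulfV // powR_inv1.
        move=> h; lra.
      - exact: measurable_funS (@mfpos R _).
      - exact: measurable_funS mG.
      - move=> r; rewrite /= in_itv /= => /andP[r0 ra].
        have u0 : 0 <= r `^ p^-1 by exact: powR_ge0.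
        apply: le_trans (@L4 _ _ _ P X mX _ u0) _.
        apply: le_measure; rewrite ?inE.
        + exact: (@mset_gt _ _ _ _ mQ').
        + exact: (@mset_gt _ _ _ _ mY).
        move=> w /= h.
        have e : r = (r `^ p^-1) `^ p by rewrite -powRrM mulVf // powRr1.
        rewrite [X in (X < _)%R]e.
        by apply: gt0_ltr_powR => //; rewrite ?nnegrE.
    apply: ge0_subset_integral => //.
    - exact: measurable_funS mG.
    - by move=> r /=; rewrite !in_itv /= => /andP[->].
  apply: (@le_trans _ _ (\int[P]_w (cst (1%E : \bar R)) w)%E).
    apply: ge0_le_integral => //.
    - by move=> w _; rewrite lee_fin.
    - exact/measurable_EFinP.
    - move=> w _; rewrite lee_fin /=.
      have := @ge0_ler_powR R p (ltW hp) _ 1 (Q0 w).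
      by rewrite nnegrE ler01 powR1 => /(_ isT (Q1 w)).
  by rewrite integral_cst // mul1e; exact: probability_le1.
split.
  rewrite lay.
  apply: (@le_trans _ _ (\int[lebesgue_measure]_(r in `[0%R, 1%R[) (cst (1%E : \bar R)) r)%E).
    by rewrite integral_cst //= lebesgue_measure_itv /= lte_fin ltr01 oppr0 adde0 mul1e.
  apply: (@le_trans _ _ (\int[lebesgue_measure]_(r in `[0%R, 1%R[)
                             P [set w | (r < qfun P X (X w) `^ p)%R])%E).
    apply: ge0_le_integral => //.
    - exact: measurable_funS mG.
    - move=> r; rewrite /= in_itv /= => /andP[r0 r1].
      have := @L4 _ _ _ P X mX _ (lexx 0); rewrite mulr0 subr0 => /le_trans; apply.
      apply: le_measure; rewrite ?inE.
      + exact: (@mset_gt _ _ _ _ mQ').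
      + exact: (@mset_gt _ _ _ _ mY).
      move=> w /= h.
      apply: lt_le_trans r1 _.
      have := @powR_le_neg R p _ 1 (ltW hp) h (Q1 w).
      by rewrite powR1.
  apply: ge0_subset_integral => //.
  - exact: measurable_funS mG.
  - by move=> r /=; rewrite !in_itv /= => /andP[->].
rewrite eqa lay.
have s1 : p^-1 < -1.
  have ps : p * p^-1 = 1 by rewrite mulfV.
  nra.
rewrite (@itv_bndbnd_setU _ _ (BLeft 0%R) (BLeft a) (BInfty _ false)); last 2 first.
- by rewrite bnd_simp ltW.
- by [].
rewrite ge0_integral_setU //.
rewrite EFinB leeD //.
  apply: (@le_trans _ _ (\int[lebesgue_measure]_(r in `[0%R, a[) (cst (1%E : \bar R)) r)%E).
    apply: ge0_le_integral => //.
    - exact: measurable_funS mG.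
    - move=> r; rewrite /= in_itv /= => /andP[r0 ra].
      apply: probability_le1; exact: (@mset_gt _ _ _ _ mY).
  by rewrite integral_cst //= lebesgue_measure_itv /= lte_fin a0 oppr0 adde0 mul1e.
rewrite -EFinN -(@FTCneg R _ _ s1 a0).
apply: ge0_le_integral => //.
- exact: measurable_funS mG.
- exact: measurable_funS (@mfneg R _).
- move=> r; rewrite /= in_itv /= andbT => ar.
  have r0 : 0 < r by apply: lt_le_trans ar.
  have u0 : 0 <= r `^ p^-1 by exact: powR_ge0.
  apply: le_trans (@L3 _ _ _ P X mX _ u0).
  apply: le_measure; rewrite ?inE.
  + exact: (@mset_gt _ _ _ _ mY).
  + exact: (@mset_le _ _ _ _ mQ').
  move=> w /= h.
  have Qp : 0 < qfun P X (X w).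
    rewrite lt_neqAle Q0 andbT; apply/eqP => Qw.
    by move: h; rewrite -Qw powR0 // => /(lt_trans r0); rewrite ltxx.
  have -> : qfun P X (X w) = (qfun P X (X w) `^ p) `^ p^-1.
    by rewrite -powRrM mulfV // powRr1 // ltW.
  apply: powR_le_neg => //; last exact: ltW.
  by rewrite ltW // (lt_trans s1) // ltrN10.
- exact: measurable_funS mG.
- apply/disj_setPS => r [] /=; rewrite !in_itv /= => /andP[_ ra] /andP[ar _].
  by move: (lt_le_trans ra ar); rewrite ltxx.
Qed.
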